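(* Let $X_{\Omega_1}$ and $X_{\Omega_2}$ be convex toric domains and assume there exists $r>0$ such that $X_{\Omega_1}\subset B^4(r)\subset X_{\Omega_2}$. Let $\{\Phi_t\}_{t\in[0,1]}\subset\mathrm{Sp}(4,\mathbb{R})$ be the loop \[\Phi_t(z_1,z_2)=\begin{cases}(e^{4\pi i t}z_1,z_2), & t\in[0,\tfrac12],\\ (z_1,e^{-4\pi i t}z_2), & t\in[\tfrac12,1].\end{cases}\] Then the loop $\{\varphi_t=\Phi_t|_{X_{\Omega_1}}\}_{t\in[0,1]}$ is contractible in $\mathrm{SympEmb}(X_{\Omega_1},X_{\Omega_2})$.
   Context: For $\Omega\subset\mathbb{R}^2_{\geq0}$, $X_\Omega=\{(z_1,z_2)\in\mathbb{C}^2 \mid \pi(|z_1|^2,|z_2|^2)\in\Omega\}$ with the restriction of $\omega_{\mathrm{std}}$. A convex toric domain is $X_\Omega$ with $\Omega=\{(x,y)\mid 0\le x\le a,\ 0\le y\le f(x)\}$ and $f:[0,a]\to\mathbb{R}_{\ge0}$ nonincreasing and concave. $B^4(r)=\{(z_1,z_2)\mid \pi|z_1|^2+\pi|z_2|^2\le r\}$. $\mathrm{SympEmb}(M,N)$ is the space of symplectic embeddings of $M$ into $N$. *)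

(* Defs.v *)
From HB Require Import structures.
From mathcomp Require Import all_boot all_order all_algebra.
From mathcomp Require Import all_classical all_reals all_analysis.
Set Implicit Arguments. Unset Strict Implicit. Unset Printing Implicit Defensive.
Import Order.TTheory GRing.Theory Num.Theory.
Import numFieldNormedType.Exports.
Local Open Scope classical_set_scope.
Local Open Scope ring_scope.

(* C^2 = R^4 with real coordinates (x1, y1, x2, y2), z_k = x_k + i y_k. *)
Definition V4 (R : realType) := 'rV[R]_4.

Definition coord {R : realType} (k : nat) (v : V4 R) : R := v ord0 (inord k).

Definition mk4 {R : realType} (a b c d : R) : V4 R :=
  \row_(i < 4) (if (i : nat) == 0%N then a else if (i : nat) == 1%N then b
               else if (i : nat) == 2%N then c else d).

Definition omega_std {R : realType} (u v : V4 R) : R :=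
  coord 0 u * coord 1 v - coord 1 u * coord 0 v
  + coord 2 u * coord 3 v - coord 3 u * coord 2 v.

Definition mu1 {R : realType} (v : V4 R) : R := pi * (coord 0 v ^+ 2 + coord 1 v ^+ 2).
Definition mu2 {R : realType} (v : V4 R) : R := pi * (coord 2 v ^+ 2 + coord 3 v ^+ 2).

Definition Omega_of {R : realType} (a : R) (f : R -> R) : set (R * R) :=
  [set p | 0 <= p.1 <= a /\ 0 <= p.2 <= f p.1].

Definition X_Omega {R : realType} (Om : set (R * R)) : set (V4 R) :=
  [set z | Om (mu1 z, mu2 z)].

(* f : [0,a] -> R_{>=0} nonincreasing and concave (only values on [0,a] matter) *)
Definition convex_toric_profile {R : realType} (a : R) (f : R -> R) : Prop :=
  0 <= a /\
  (forall x, 0 <= x <= a -> 0 <= f x) /\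
  (forall x y, 0 <= x <= a -> 0 <= y <= a -> x <= y -> f y <= f x) /\
  (forall x y (l : R), 0 <= x <= a -> 0 <= y <= a -> 0 <= l <= 1 ->
      l * f x + (1 - l) * f y <= f (l * x + (1 - l) * y)).

Definition ball4 {R : realType} (r : R) : set (V4 R) :=
  [set z | mu1 z + mu2 z <= r].

Fixpoint iterD {R : realType} (ds : seq (V4 R)) (f : V4 R -> V4 R) : V4 R -> V4 R :=
  match ds with
  | [::] => f
  | v :: ds' => fun x => derive (iterD ds' f) x v
  end.

Definition smooth_on {R : realType} (U : set (V4 R)) (f : V4 R -> V4 R) : Prop :=
  forall (ds : seq (V4 R)) (x : V4 R), U x ->
    (forall v, derivable (iterD ds f) x v) /\ {for x, continuous (iterD ds f)}.

Definition symp_emb {R : realType} (X Y : set (V4 R)) (phi : V4 R -> V4 R) : Prop :=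
  (exists U : set (V4 R), open U /\ X `<=` U /\ smooth_on U phi) /\
  (forall x y, X x -> X y -> phi x = phi y -> x = y) /\
  (forall x, X x -> Y (phi x)) /\
  (forall x, X x -> forall u v,
      omega_std (derive phi x u) (derive phi x v) = omega_std u v).

Definition unit_square {R : realType} : set (R * R) :=
  [set st | 0 <= st.1 <= 1 /\ 0 <= st.2 <= 1].

(* a 2-parameter family G : [0,1]^2 -> SympEmb(X,Y), continuous for the
   C^infty topology: every x-derivative (of every order) is jointly
   continuous on [0,1]^2 x X. *)
Definition cinf_continuous_family {R : realType} (X : set (V4 R))
    (G : R -> R -> V4 R -> V4 R) : Prop :=
  forall ds : seq (V4 R),
    {within [set p : (R * R) * V4 R | unit_square p.1 /\ X p.2],
      continuous (fun p : (R * R) * V4 R => iterD ds (G p.1.1 p.1.2) p.2)}.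

(* Elements of SympEmb(X,Y)
   are maps on X, so equalities are imposed on X. *)
Definition loop_contractible_in_SympEmb {R : realType} (X Y : set (V4 R))
    (phi : R -> V4 R -> V4 R) : Prop :=
  exists H : R -> R -> V4 R -> V4 R,
    (forall s t, unit_square (s, t) -> symp_emb X Y (H s t)) /\
    cinf_continuous_family X H /\
    (forall t x, 0 <= t <= 1 -> X x -> H 0 t x = phi t x) /\
    (forall s x, 0 <= s <= 1 -> X x -> H s 0 x = H s 1 x) /\
    (forall t x, 0 <= t <= 1 -> X x -> H 1 t x = H 1 0 x).

Definition Phi_loop {R : realType} (t : R) (z : V4 R) : V4 R :=
  if t <= 2^-1 then
    let th := 4 * pi * t in
    mk4 (cos th * coord 0 z - sin th * coord 1 z)
        (sin th * coord 0 z + cos th * coord 1 z)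
        (coord 2 z) (coord 3 z)
  else
    let th := - (4 * pi * t) in
    mk4 (coord 0 z) (coord 1 z)
        (cos th * coord 2 z - sin th * coord 3 z)
        (sin th * coord 2 z + cos th * coord 3 z).

(* Main.v *)
Require Import Defs.
From HB Require Import structures.
From mathcomp Require Import all_boot all_order all_algebra.
From mathcomp Require Import all_classical all_reals all_analysis.
From mathcomp Require Import ring lra.
Import Order.TTheory GRing.Theory Num.Theory.
Import numFieldNormedType.Exports.
Local Open Scope classical_set_scope.
Local Open Scope ring_scope.

Section S.
Variable R : realType.

Lemma entry_cont m n (i : 'I_m) (j : 'I_n) : continuous (fun x : 'M[R]_(m,n) => x i j).
Proof.
move=> u A /nbhs_ballP[e /= e0 eA].
apply/nbhs_ballP; exists e => //= v [_ uv]; apply: eA; exact: uv.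
Qed.

Lemma mx_cont {T : topologicalType} m n (F : T -> 'M[R]_(m,n)) :
  (forall i j, continuous (fun p => F p i j)) -> continuous F.
Proof.
move=> Fc p A /nbhs_ballP[e /= e0 eA].
have : \forall q \near p, forall ij : 'I_m * 'I_n, ball (F p ij.1 ij.2) e (F q ij.1 ij.2).
  apply: filter_forall => ij.
  have := Fc ij.1 ij.2 p.
  move=> /(_ (ball (F p ij.1 ij.2) e)); apply.
  exact: nbhsx_ballx.
apply: filterS => q H; apply: eA; split => // i j; exact: (H (i, j)).
Qed.

Lemma sum_cont {T : topologicalType} n (f : 'I_n -> T -> R) :
  (forall k, continuous (f k)) -> continuous (fun p => \sum_k f k p).
Proof.
move=> fc; elim: n f fc => [|n IH] f fc.
  under eq_fun do rewrite big_ord0; move=> x; exact: cvg_cst.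
under eq_fun do rewrite big_ord_recr /=.
move=> x; apply: continuousD; first exact: (IH (fun k => f (widen_ord (leqnSn n) k))).
exact: fc.
Qed.

Definition ecnt {T : topologicalType} {m n} (F : T -> 'M[R]_(m,n)) :=
  forall i j, continuous (fun p => F p i j).

Lemma ecnt_mul {T : topologicalType} m n l (A : T -> 'M[R]_(m,n)) (B : T -> 'M[R]_(n,l)) :
  ecnt A -> ecnt B -> ecnt (fun p => A p *m B p).
Proof.
move=> Ac Bc i j.
under eq_fun do rewrite mxE.
apply: sum_cont => k x; apply: continuousM; [exact: Ac | exact: Bc].
Qed.


Lemma ecnt_cst {T : topologicalType} m n (M : 'M[R]_(m,n)) : ecnt (fun _ : T => M).
Proof. move=> i j x; exact: cvg_cst. Qed.

Lemma ecnt_id m n : ecnt (fun x : 'M[R]_(m,n) => x).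
Proof. move=> i j; exact: entry_cont. Qed.

Lemma lin_cont m n l (M : 'M[R]_(n,l)) : continuous (mulmxr M : 'M[R]_(m,n) -> _).
Proof. apply: mx_cont; apply: ecnt_mul; [exact: ecnt_id|exact: ecnt_cst]. Qed.

Lemma lin_is_derive (M : 'M[R]_4) (x v : V4 R) :
  is_derive x v (fun y : V4 R => y *m M) (v *m M).
Proof.
have c := @lin_cont 1 4 4 M.
have d := linear_differentiable x c.
apply: DeriveDef; first exact: diff_derivable.
rewrite deriveE // (diff_lin _ c) //=.
Qed.

Lemma iterD_lin (M : 'M[R]_4) (v : V4 R) (ds : seq (V4 R)) :
  Defs.iterD (v :: ds) (fun y : V4 R => y *m M) =
  cst (if ds is [::] then v *m M else 0).
Proof.
elim: ds v => [|w ds IH] v /=.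
  apply/funext => x; exact: (@derive_val _ _ _ _ _ _ _ (lin_is_derive M x v)).
apply/funext => x /=.
have -> : (fun x => derive (Defs.iterD ds (fun y : V4 R => y *m M)) x w) = Defs.iterD (w :: ds) (fun y : V4 R => y *m M) by [].
rewrite IH; exact: derive_cst.
Qed.


Definition tab (a b e : nat -> nat -> R) (c s : R) : 'M[R]_4 :=
  \matrix_(k < 4, j < 4) (c * a k j + s * b k j + e k j).
Definition rot a b e (th : R) := tab a b e (cos th) (sin th).

Definition aD1 (k j : nat) : R := match k, j with O, O | S O, S O => 1 | _, _ => 0 end.
Definition bD1 (k j : nat) : R := match k, j with O, S O => 1 | S O, O => -1 | _, _ => 0 end.
Definition eD1 (k j : nat) : R := match k, j with S (S O), S (S O) | S (S (S O)), S (S (S O)) => 1 | _, _ => 0 end.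
Definition aD2 (k j : nat) : R := match k, j with S (S O), S (S O) | S (S (S O)), S (S (S O)) => 1 | _, _ => 0 end.
Definition bD2 (k j : nat) : R := match k, j with S (S O), S (S (S O)) => 1 | S (S (S O)), S (S O) => -1 | _, _ => 0 end.
Definition eD2 (k j : nat) : R := match k, j with O, O | S O, S O => 1 | _, _ => 0 end.
Definition aC (k j : nat) : R := match k, j with O, O | S O, S O | S (S O), S (S O) | S (S (S O)), S (S (S O)) => 1 | _, _ => 0 end.
Definition bC (k j : nat) : R := match k, j with O, S (S O) | S O, S (S (S O)) => 1 | S (S O), O | S (S (S O)), S O => -1 | _, _ => 0 end.
Definition eC (k j : nat) : R := 0.

Definition D1 := rot aD1 bD1 eD1.
Definition D2 := rot aD2 bD2 eD2.
Definition CC := rot aC bC eC.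

Ltac mxcase := apply/matrixP => - [[|[|[|[|?]]]] ?] // - [[|[|[|[|?]]]] ?] //;
  rewrite !mxE !big_ord_recl big_ord0 !mxE /=.

Lemma D1D x y : D1 x *m D1 y = D1 (x + y).
Proof. rewrite /D1 /rot /tab; mxcase; rewrite /= ?cosD ?sinD; ring. Qed.

Lemma D2D x y : D2 x *m D2 y = D2 (x + y).
Proof. rewrite /D2 /rot /tab; mxcase; rewrite /= ?cosD ?sinD; ring. Qed.
Lemma CCD x y : CC x *m CC y = CC (x + y).
Proof. rewrite /CC /rot /tab /eC; mxcase; rewrite /= ?cosD ?sinD; ring. Qed.
Ltac mxcase0 := apply/matrixP => - [[|[|[|[|?]]]] ?] // - [[|[|[|[|?]]]] ?] //;
  rewrite !mxE /= cos0 sin0; ring.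
Lemma D1_0 : D1 0 = 1%:M.
Proof. rewrite /D1 /rot /tab; mxcase0. Qed.
Lemma D2_0 : D2 0 = 1%:M.
Proof. rewrite /D2 /rot /tab; mxcase0. Qed.
Lemma CC_0 : CC 0 = 1%:M.
Proof. rewrite /CC /rot /tab /eC; mxcase0. Qed.
Lemma conjC b : CC (- (pi / 2)) *m D2 b *m CC (pi / 2) = D1 b.
Proof.
rewrite /CC /D1 /D2 /rot /tab.
apply/matrixP => - [[|[|[|[|?]]]] ?] // - [[|[|[|[|?]]]] ?] //;
  rewrite !mxE !big_ord_recl !big_ord0 !mxE !big_ord_recl !big_ord0 !mxE /=;
  rewrite /eC cosN sinN cos_pihalf sin_pihalf; ring.
Qed.

Definition nrm (u : V4 R) := Defs.coord 0 u ^+ 2 + Defs.coord 1 u ^+ 2 + Defs.coord 2 u ^+ 2 + Defs.coord 3 u ^+ 2.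

Lemma coord_mul (u : V4 R) (M : 'M[R]_4) k : (k < 4)%N ->
  Defs.coord k (u *m M) = Defs.coord 0 u * M (inord 0) (inord k) + Defs.coord 1 u * M (inord 1) (inord k)
    + Defs.coord 2 u * M (inord 2) (inord k) + Defs.coord 3 u * M (inord 3) (inord k).
Proof.
move=> hk; rewrite /Defs.coord mxE !big_ord_recl big_ord0 addr0 !addrA.
have e0 : ord0 = inord 0 :> 'I_4 by apply/val_inj; rewrite /= inordK.
have e1 : lift ord0 ord0 = inord 1 :> 'I_4 by apply/val_inj; rewrite /= inordK.
have e2 : lift ord0 (lift ord0 ord0) = inord 2 :> 'I_4 by apply/val_inj; rewrite /= inordK.
have e3 : lift ord0 (lift ord0 (lift ord0 ord0)) = inord 3 :> 'I_4 by apply/val_inj; rewrite /= inordK.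
by rewrite e3 e2 e1 -e0.
Qed.

Lemma tabE a b e c s k j : (k < 4)%N -> (j < 4)%N ->
  tab a b e c s (inord k) (inord j) = c * a k j + s * b k j + e k j.
Proof. by move=> hk hj; rewrite /tab mxE !inordK. Qed.


Lemma D1_omega th (u v : V4 R) : omega_std (u *m D1 th) (v *m D1 th) = omega_std u v.
Proof.
rewrite /omega_std /D1 /rot !coord_mul // !tabE //= /aD1 /bD1 /eD1 /=.
have h := cos2Dsin2 th.
set u0 := Defs.coord 0 u; set u1 := Defs.coord 1 u; set u2 := Defs.coord 2 u; set u3 := Defs.coord 3 u.
set v0 := Defs.coord 0 v; set v1 := Defs.coord 1 v; set v2 := Defs.coord 2 v; set v3 := Defs.coord 3 v.
transitivity ((cos th ^+ 2 + sin th ^+ 2) * (u0 * v1 - u1 * v0) + (u2 * v3 - u3 * v2)); first ring.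
rewrite h mul1r; ring.
Qed.

Lemma D2_omega th (u v : V4 R) : omega_std (u *m D2 th) (v *m D2 th) = omega_std u v.
Proof.
rewrite /omega_std /nrm /D2 /rot /aD2 /bD2 /eD2 !coord_mul // !tabE //= /=.
have h := cos2Dsin2 th.
set u0 := Defs.coord 0 u; set u1 := Defs.coord 1 u; set u2 := Defs.coord 2 u; set u3 := Defs.coord 3 u.
set v0 := Defs.coord 0 v; set v1 := Defs.coord 1 v; set v2 := Defs.coord 2 v; set v3 := Defs.coord 3 v.
transitivity ((cos th ^+ 2 + sin th ^+ 2) * (u2 * v3 - u3 * v2) + (u0 * v1 - u1 * v0)); first ring.
rewrite h mul1r; ring.
Qed.

Lemma CC_omega th (u v : V4 R) : omega_std (u *m CC th) (v *m CC th) = omega_std u v.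
Proof.
rewrite /omega_std /nrm /CC /rot /aC /bC /eC !coord_mul // !tabE //= /=.
have h := cos2Dsin2 th.
set u0 := Defs.coord 0 u; set u1 := Defs.coord 1 u; set u2 := Defs.coord 2 u; set u3 := Defs.coord 3 u.
set v0 := Defs.coord 0 v; set v1 := Defs.coord 1 v; set v2 := Defs.coord 2 v; set v3 := Defs.coord 3 v.
transitivity ((cos th ^+ 2 + sin th ^+ 2) * (u0 * v1 - u1 * v0 + u2 * v3 - u3 * v2) + (0)); first ring.
rewrite h mul1r; ring.
Qed.

Lemma D1_nrm th (u v : V4 R) : nrm (u *m D1 th) = nrm u.
Proof.
rewrite /omega_std /nrm /D1 /rot /aD1 /bD1 /eD1 !coord_mul // !tabE //= /=.
have h := cos2Dsin2 th.
set u0 := Defs.coord 0 u; set u1 := Defs.coord 1 u; set u2 := Defs.coord 2 u; set u3 := Defs.coord 3 u.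
set v0 := Defs.coord 0 v; set v1 := Defs.coord 1 v; set v2 := Defs.coord 2 v; set v3 := Defs.coord 3 v.
transitivity ((cos th ^+ 2 + sin th ^+ 2) * (u0 ^+ 2 + u1 ^+ 2) + (u2 ^+ 2 + u3 ^+ 2)); first ring.
rewrite h mul1r; ring.
Qed.

Lemma D2_nrm th (u v : V4 R) : nrm (u *m D2 th) = nrm u.
Proof.
rewrite /omega_std /nrm /D2 /rot /aD2 /bD2 /eD2 !coord_mul // !tabE //= /=.
have h := cos2Dsin2 th.
set u0 := Defs.coord 0 u; set u1 := Defs.coord 1 u; set u2 := Defs.coord 2 u; set u3 := Defs.coord 3 u.
set v0 := Defs.coord 0 v; set v1 := Defs.coord 1 v; set v2 := Defs.coord 2 v; set v3 := Defs.coord 3 v.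
transitivity ((cos th ^+ 2 + sin th ^+ 2) * (u2 ^+ 2 + u3 ^+ 2) + (u0 ^+ 2 + u1 ^+ 2)); first ring.
rewrite h mul1r; ring.
Qed.

Lemma CC_nrm th (u v : V4 R) : nrm (u *m CC th) = nrm u.
Proof.
rewrite /omega_std /nrm /CC /rot /aC /bC /eC !coord_mul // !tabE //= /=.
have h := cos2Dsin2 th.
set u0 := Defs.coord 0 u; set u1 := Defs.coord 1 u; set u2 := Defs.coord 2 u; set u3 := Defs.coord 3 u.
set v0 := Defs.coord 0 v; set v1 := Defs.coord 1 v; set v2 := Defs.coord 2 v; set v3 := Defs.coord 3 v.
transitivity ((cos th ^+ 2 + sin th ^+ 2) * (u0 ^+ 2 + u1 ^+ 2 + u2 ^+ 2 + u3 ^+ 2) + (0)); first ring.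
rewrite h mul1r; ring.
Qed.


Lemma rot_2pi a b e : rot a b e (pi *+ 2) = rot a b e 0.
Proof. by rewrite /rot cos2pi sin2pi cos0 sin0. Qed.
Lemma rot_m2pi a b e : rot a b e (- (pi *+ 2)) = rot a b e 0.
Proof. by rewrite /rot cosN sinN cos2pi sin2pi cos0 sin0 oppr0. Qed.

Definition pp (s : R) : R := Order.min (2 * s) 1.
Definition qq (s : R) : R := Order.max (2 * s - 1) 0.
Definition ph (s : R) : R := pi / 2 * pp s.
Definition al (s t : R) : R := (1 - qq s) * (4 * pi * Order.min t (2^-1)).
Definition be (s t : R) : R := (1 - qq s) * (- (4 * pi) * Order.max (t - 2^-1) 0).
Definition MM (s t : R) : 'M[R]_4 :=
  CC (- ph s) *m D2 (be s t) *m CC (ph s) *m D1 (al s t).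

Lemma MM_omega s t u v : omega_std (u *m MM s t) (v *m MM s t) = omega_std u v.
Proof. by rewrite /MM !mulmxA D1_omega CC_omega D2_omega CC_omega. Qed.

Lemma MM_nrm s t u : nrm (u *m MM s t) = nrm u.
Proof. by rewrite /MM !mulmxA (D1_nrm _ _ u) (CC_nrm _ _ u) (D2_nrm _ _ u) (CC_nrm _ _ u). Qed.

Lemma CC_inv p : CC (- p) *m CC p = 1%:M.
Proof. by rewrite CCD addNr CC_0. Qed.

Lemma MM_t0 s : MM s 0 = 1%:M.
Proof.
rewrite /MM /al /be min_l; last by rewrite invr_ge0.
rewrite max_r; last by rewrite sub0r oppr_le0 invr_ge0.
rewrite !mulr0 D1_0 D2_0 !mulmx1 CC_inv //.
Qed.

Lemma MM_t1 s : MM s 1 = 1%:M.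
Proof.
have h2 : (2^-1 : R) <= 1 by rewrite invf_le1 // ler1n.
rewrite /MM /al /be min_r //.
rewrite max_l; last by rewrite subr_ge0.
have -> : (1 - 2^-1 : R) = 2^-1 by rewrite {1}(splitr 1) mul1r addrK.
have e : 4 * pi * 2^-1 = pi *+ 2 :> R by rewrite mulr2n; field.
have e' : - (4 * pi) * 2^-1 = - (pi *+ 2) :> R by rewrite mulNr e.
rewrite e e'.
case: (leP s (2^-1)) => hs.
  rewrite /qq max_r; last by lra.
  rewrite subr0 !mul1r /D1 /D2 rot_2pi rot_m2pi -/D1 -/D2 D1_0 D2_0 !mulmx1 CC_inv //.
rewrite /ph /pp min_r; last by lra.
rewrite mulr1 conjC D1D -mulrDr addNr mulr0 D1_0 //.
Qed.

Lemma MM_s1 t : MM 1 t = 1%:M.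
Proof.
have q1 : qq 1 = 1 by rewrite /qq max_l; lra.
rewrite /MM /al /be q1 subrr !mul0r D1_0 D2_0 !mulmx1 CC_inv //.
Qed.

Lemma coord_mk4 (a b c d : R) k : (k < 4)%N ->
  Defs.coord k (mk4 a b c d) = if k == 0%N then a else if k == 1%N then b
               else if k == 2%N then c else d.
Proof. by move=> hk; rewrite /Defs.coord /mk4 mxE inordK. Qed.

Lemma vec_eq (u v : V4 R) : (forall k, (k < 4)%N -> Defs.coord k u = Defs.coord k v) -> u = v.
Proof.
move=> h; apply/rowP => j; have := h j (ltn_ord j); rewrite /Defs.coord inord_val => ->; by [].
Qed.

Lemma rot_per a b e x : rot a b e (x + pi *+ 2) = rot a b e x.
Proof. by rewrite /rot cosD2pi sinD2pi. Qed.

Lemma mulD1 th x : x *m D1 th =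
  mk4 (cos th * Defs.coord 0 x - sin th * Defs.coord 1 x)
      (sin th * Defs.coord 0 x + cos th * Defs.coord 1 x)
      (Defs.coord 2 x) (Defs.coord 3 x).
Proof.
apply: vec_eq => k hk; rewrite coord_mk4 // coord_mul // !tabE //.
by case: k hk => [|[|[|[|k]]]] hk //=; rewrite /aD1 /bD1 /eD1 /=; ring.
Qed.

Lemma mulD2 th x : x *m D2 th =
  mk4 (Defs.coord 0 x) (Defs.coord 1 x)
      (cos th * Defs.coord 2 x - sin th * Defs.coord 3 x)
      (sin th * Defs.coord 2 x + cos th * Defs.coord 3 x).
Proof.
apply: vec_eq => k hk; rewrite coord_mk4 // coord_mul // !tabE //.
by case: k hk => [|[|[|[|k]]]] hk //=; rewrite /aD2 /bD2 /eD2 /=; ring.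
Qed.

Lemma MM_s0 t x : 0 <= t -> x *m MM 0 t = Phi_loop t x.
Proof.
move=> t0.
have q0 : qq 0 = 0 by rewrite /qq max_r; lra.
have ph0 : ph 0 = 0 by rewrite /ph /pp min_l ?mulr0 //; lra.
rewrite /MM ph0 oppr0 CC_0 mul1mx mulmx1 /al /be q0 subr0 !mul1r /Phi_loop.
case: ifP => ht /=.
  rewrite min_l // max_r; last by lra.
  by rewrite mulr0 D2_0 mul1mx mulD1.
rewrite min_r; last by move/negbT: ht; rewrite -ltNge => /ltW.
rewrite max_l; last by move/negbT: ht; rewrite -ltNge subr_ge0 => /ltW.
have e : 4 * pi * 2^-1 = pi *+ 2 :> R by rewrite mulr2n; field.
have e' : - (4 * pi) * (t - 2^-1) = - (4 * pi * t) + pi *+ 2 :> R.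
  by rewrite -e; ring.
rewrite e e' /D1 /D2 rot_2pi rot_per -/D1 -/D2 D1_0 mulmx1 mulD2 //.
Qed.


Section Cont.
Variable T : topologicalType.
Implicit Types f g : T -> R.

Lemma cmin f g : continuous f -> continuous g -> continuous (fun p => Order.min (f p) (g p)).
Proof. move=> cf cg x; exact: (@continuous_min R T f g x (cf x) (cg x)). Qed.
Lemma cmax f g : continuous f -> continuous g -> continuous (fun p => Order.max (f p) (g p)).
Proof. move=> cf cg x; exact: (@continuous_max R T f g x (cf x) (cg x)). Qed.
Lemma cmul f g : continuous f -> continuous g -> continuous (fun p => f p * g p).
Proof. move=> cf cg x; exact: (continuousM (cf x) (cg x)). Qed.
Lemma cadd f g : continuous f -> continuous g -> continuous (fun p => f p + g p).
Proof. move=> cf cg x; exact: (continuousD (cf x) (cg x)). Qed.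
Lemma copp f : continuous f -> continuous (fun p => - f p).
Proof. move=> cf x; exact: (continuousN (cf x)). Qed.
Lemma ccst (c : R) : continuous (fun _ : T => c).
Proof. move=> x; exact: cvg_cst. Qed.
Lemma ccos f : continuous f -> continuous (fun p => cos (f p)).
Proof. move=> cf x; exact: (continuous_comp (cf x) (@continuous_cos R (f x))). Qed.
Lemma csin f : continuous f -> continuous (fun p => sin (f p)).
Proof. move=> cf x; exact: (continuous_comp (cf x) (@continuous_sin R (f x))). Qed.

Lemma ecnt_rot a b e f : continuous f -> ecnt (fun p => rot a b e (f p)).
Proof.
move=> cf i j; rewrite /rot /tab.
under eq_fun do rewrite mxE.
apply: cadd; [apply: cadd|]; try apply: cmul; try exact: ccst.
- exact: ccos.
- exact: csin.
Qed.

Lemma cqq f : continuous f -> continuous (fun p => qq (f p)).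
Proof.
move=> cf; rewrite /qq; apply: cmax; last exact: ccst.
apply: cadd; last exact: ccst; apply: cmul => //; exact: ccst.
Qed.

Lemma cph f : continuous f -> continuous (fun p => ph (f p)).
Proof.
move=> cf; rewrite /ph /pp; apply: cmul; first exact: ccst.
apply: cmin; last exact: ccst; apply: cmul => //; exact: ccst.
Qed.

Lemma cal f g : continuous f -> continuous g -> continuous (fun p => al (f p) (g p)).
Proof.
move=> cf cg; rewrite /al; apply: cmul.
  apply: cadd; [exact: ccst| apply: copp; exact: cqq].
apply: cmul; first exact: ccst.
apply: cmin => //; exact: ccst.
Qed.

Lemma cbe f g : continuous f -> continuous g -> continuous (fun p => be (f p) (g p)).
Proof.
move=> cf cg; rewrite /be; apply: cmul.
  apply: cadd; [exact: ccst| apply: copp; exact: cqq].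
apply: cmul; first exact: ccst.
apply: cmax; last exact: ccst.
apply: cadd => //; exact: ccst.
Qed.

Lemma ecnt_MM f g : continuous f -> continuous g -> ecnt (fun p => MM (f p) (g p)).
Proof.
move=> cf cg; rewrite /MM.
apply: ecnt_mul; [apply: ecnt_mul; [apply: ecnt_mul|]|].
- apply: ecnt_rot; apply: copp; exact: cph.
- apply: ecnt_rot; exact: cbe.
- apply: ecnt_rot; exact: cph.
- apply: ecnt_rot; exact: cal.
Qed.

End Cont.


Lemma coord0 k : Defs.coord k (0 : V4 R) = 0.
Proof. by rewrite /Defs.coord mxE. Qed.

Lemma nrm_eq0 (u : V4 R) : nrm u = 0 -> u = 0.
Proof.
rewrite /nrm => h.
have h0 := sqr_ge0 (Defs.coord 0 u); have h1 := sqr_ge0 (Defs.coord 1 u).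
have h2 := sqr_ge0 (Defs.coord 2 u); have h3 := sqr_ge0 (Defs.coord 3 u).
apply: vec_eq => k hk; rewrite coord0; apply/eqP; rewrite -sqrf_eq0; apply/eqP.
case: k hk => [|[|[|[|k]]]] hk //=; lra.
Qed.

Lemma mu_nrm (z : V4 R) : mu1 z + mu2 z = pi * nrm z.
Proof. rewrite /mu1 /mu2 /nrm; ring. Qed.

Lemma c11 : continuous (fun p : (R * R) * V4 R => p.1.1).
Proof. move=> p; exact: (continuous_comp (@cvg_fst _ _ _ _ _) (@cvg_fst _ _ _ _ _)). Qed.
Lemma c12 : continuous (fun p : (R * R) * V4 R => p.1.2).
Proof. move=> p; exact: (continuous_comp (@cvg_fst _ _ _ _ _) (@cvg_snd _ _ _ _ _)). Qed.
Lemma ecnt_snd : ecnt (fun p : (R * R) * V4 R => p.2).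
Proof. move=> i j p; exact: (continuous_comp (@cvg_snd _ _ _ _ _) (@entry_cont 1 4 i j p.2)). Qed.

Definition HH (s t : R) : V4 R -> V4 R := fun x => x *m MM s t.

Lemma HH_symp (X Y : set (V4 R)) r s t :
  X `<=` ball4 r -> ball4 r `<=` Y -> symp_emb X Y (HH s t).
Proof.
move=> hA hB; split; [|split; [|split]].
- exists setT; split; first exact: openT; split => //.
  move=> [|v ds] x _.
    split; [move=> w; exact: (@ex_derive _ _ _ _ _ _ _ (lin_is_derive (MM s t) x w))|].
    exact: (@lin_cont 1 4 4 (MM s t) x).
  rewrite /HH iterD_lin; split; [move=> w; exact: derivable_cst|exact: (@cst_continuous _ _ _ x)].
- move=> x y _ _; rewrite /HH => hxy.
  have : nrm ((x - y) *m MM s t) = 0.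
    by rewrite mulmxBl hxy subrr /nrm !coord0 expr0n /=; ring.
  by rewrite MM_nrm => /nrm_eq0 /eqP; rewrite subr_eq0 => /eqP.
- move=> x Xx; apply: hB; rewrite /ball4 /HH /= mu_nrm MM_nrm -mu_nrm; exact: hA.
- move=> x _ u v; rewrite /HH.
  rewrite (@derive_val _ _ _ _ _ _ _ (lin_is_derive (MM s t) x u)).
  rewrite (@derive_val _ _ _ _ _ _ _ (lin_is_derive (MM s t) x v)).
  exact: MM_omega.
Qed.

Lemma HH_family (X : set (V4 R)) : cinf_continuous_family X HH.
Proof.
move=> ds; apply: continuous_subspaceT.
case: ds => [|v ds].
  apply: mx_cont; apply: ecnt_mul; [exact: ecnt_snd| exact: ecnt_MM c11 c12].
rewrite /HH; under eq_fun do rewrite iterD_lin.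
case: ds => [|w ds] /=.
  apply: mx_cont; apply: ecnt_mul; [exact: ecnt_cst| exact: ecnt_MM c11 c12].
move=> p; exact: cvg_cst.
Qed.

End S.

Theorem proposition1p10 (R : realType) (a1 a2 : R) (f1 f2 : R -> R) (r : R) :
  convex_toric_profile a1 f1 ->
  convex_toric_profile a2 f2 ->
  0 < r ->
  X_Omega (Omega_of a1 f1) `<=` ball4 r ->
  ball4 r `<=` X_Omega (Omega_of a2 f2) ->
  loop_contractible_in_SympEmb (X_Omega (Omega_of a1 f1)) (X_Omega (Omega_of a2 f2))
    (fun t => Phi_loop t).
Proof.
move=> _ _ _ hA hB.
exists (@HH R); split; [|split; [|split; [|split]]].
- move=> s t _; exact: HH_symp hA hB.
- exact: HH_family.
- move=> t x /andP[t0 _] _; rewrite /HH MM_s0 //.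
- move=> s x _ _; rewrite /HH MM_t0 MM_t1 //.
- move=> t x _ _; rewrite /HH !MM_s1 //.
Qed.
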